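(* For every 2-qubit pure state $\rho$, its posterior $\chi^2$ divergence information content satisfies $I_{\chi^2,post}(\rho)\le 2$, and the value $2$ is attained by some 2-qubit pure state. In other words, the upper bound on the posterior information content of the 2-qubit pure state system is exactly $2$.
   Context: Let $\sigma_1=\begin{pmatrix}0&1\\1&0\end{pmatrix}$, $\sigma_2=\begin{pmatrix}0&-i\\i&0\end{pmatrix}$, $\sigma_3=\begin{pmatrix}1&0\\0&-1\end{pmatrix}$. For a 2-qubit density matrix $\rho$ its Bloch vector is $(b_1,\dots,b_{16})$, where $b_1=\operatorname{tr}\rho=1$; $(b_2,b_3,b_4)=\boldsymbol{\alpha}$ with $\alpha_j=\operatorname{tr}((\sigma_j\otimes I)\rho)$; $(b_5,b_6,b_7)=\boldsymbol{\beta}$ with $\beta_j=\operatorname{tr}((I\otimes\sigma_j)\rho)$; and $(b_8,\dots,b_{16})$ are the entries $C_{jk}=\operatorname{tr}((\sigma_j\otimes\sigma_k)\rho)$ of the $3\times3$ correlation matrix $C$ listed in row-major order. A pure state is $\rho=|\psi\rangle\langle\psi|$ with $|\psi\rangle\in\mathbb{C}^2\otimes\mathbb{C}^2$ a unit vector. For $b\in[-1,1]$ and $h\in(-1,1)$ define $D_{\chi^2}(b,h)=\frac{((b+1)/2)^2}{(h+1)/2}+\frac{((1-b)/2)^2}{(1-h)/2}-1$; if $h=\pm1$ and $b=h$, set $D_{\chi^2}(b,h)=0$. The posterior $\chi^2$ divergence information content of a 2-qubit pure state with Bloch vector $(b_1,\dots,b_{16})$ is defined as follows. For each $i=2,\dots,16$,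 let $b_i^{max}$ and $b_i^{min}$ be the maximum and the minimum of the $i$-th Bloch component over all 2-qubit pure states whose Bloch components $1,\dots,i-1$ coincide with $b_1,\dots,b_{i-1}$. Put $h_i=(b_i^{max}+b_i^{min})/2$. Then $I_{\chi^2,post}=\sum_{i=2}^{16}D_{\chi^2}(b_i,h_i)$. *)

(* Defs.v *)
From HB Require Import structures.
From mathcomp Require Import all_boot all_order all_algebra.
From mathcomp Require Import complex.
From mathcomp Require Import all_classical all_reals.
Set Implicit Arguments. Unset Strict Implicit. Unset Printing Implicit Defensive.
Import Order.TTheory GRing.Theory Num.Theory ComplexField.
Local Open Scope ring_scope.
Local Open Scope classical_set_scope.

Section TwoQubit.
Variable R : realType.
Local Notation C := R[i].

(* sigma 0 = identity, sigma 1,2,3 = Pauli matrices, indexed by 'I_2 x 'I_2 *)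
Definition sigma (j : nat) (a b : 'I_2) : C :=
  match j with
  | 0%N => if a == b then 1 else 0
  | 1%N => if a == b then 0 else 1
  | 2%N => if a == b then 0 else if val a == 0%N then - 'i else 'i
  | 3%N => if a == b then (if val a == 0%N then 1 else -1) else 0
  | _ => 0
  end.

(* a vector of C^2 (x) C^2, with amplitude psi a b on |a>|b> *)
Definition qvec := 'I_2 -> 'I_2 -> C.

Definition is_pure (psi : qvec) : Prop :=
  \sum_(a < 2) \sum_(b < 2) psi a b * (psi a b)^* = 1.

(* density matrix rho = |psi><psi|, entry ((a,b),(c,d)) *)
Definition rho (psi : qvec) (a b c d : 'I_2) : C := psi a b * (psi c d)^*.

(* tr((sigma_j (x) sigma_k) rho) *)
Definition tr_obs (j k : nat) (psi : qvec) : C :=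
  \sum_(a < 2) \sum_(b < 2) \sum_(c < 2) \sum_(d < 2)
     (sigma j a c * sigma k b d) * rho psi c d a b.

Definition bloch_obs (i : nat) : nat * nat :=
  if i == 1%N then (0%N, 0%N)
  else if (2 <= i <= 4)%N then ((i - 1)%N, 0%N)
  else if (5 <= i <= 7)%N then (0%N, (i - 4)%N)
  else (((i - 8) %/ 3).+1, ((i - 8) %% 3).+1).

(* Bloch component b_i (1 <= i <= 16); traces of Hermitian operators
   against rho are real, we take the real part. *)
Definition bloch (psi : qvec) (i : nat) : R :=
  complex.Re (tr_obs (bloch_obs i).1 (bloch_obs i).2 psi).

Definition Dchi2 (b h : R) : R :=
  if ((h == 1) || (h == -1)) && (b == h) then 0
  else ((b + 1) / 2) ^+ 2 / ((h + 1) / 2) + ((1 - b) / 2) ^+ 2 / ((1 - h) / 2) - 1.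

Definition compat_values (psi : qvec) (i : nat) : set R :=
  [set bloch phi i | phi in [set phi | is_pure phi /\
      (forall k, (1 <= k < i)%N -> bloch phi k = bloch psi k)]].

Definition bmax (psi : qvec) (i : nat) : R := sup (compat_values psi i).
Definition bmin (psi : qvec) (i : nat) : R := inf (compat_values psi i).
Definition hmid (psi : qvec) (i : nat) : R := (bmax psi i + bmin psi i) / 2.

Definition I_chi2_post (psi : qvec) : R :=
  \sum_(2 <= i < 17) Dchi2 (bloch psi i) (hmid psi i).

End TwoQubit.

(* Main.v *)
Require Import Defs.
From HB Require Import structures.
From mathcomp Require Import all_boot all_order all_algebra.
From mathcomp Require Import complex.
From mathcomp Require Import all_classical all_reals.
Import Order.TTheory GRing.Theory Num.Theory.
Local Open Scope ring_scope.
From mathcomp Require Import ring lra.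
Set Implicit Arguments. Unset Strict Implicit. Unset Printing Implicit Defensive.

Section S.
Variable R : realType.
Local Notation C := R[i].

Record st := St { x0 : R; x1 : R; x2 : R; x3 : R; y0 : R; y1 : R; y2 : R; y3 : R }.
Definition nrm (s : st) : R := (x0 s)^+2 + (x1 s)^+2 + (x2 s)^+2 + (x3 s)^+2 + (y0 s)^+2 + (y1 s)^+2 + (y2 s)^+2 + (y3 s)^+2.
Definition al1 (s : st) : R := 2%:R * (x0 s) * (x2 s) + 2%:R * (x1 s) * (x3 s) + 2%:R * (y0 s) * (y2 s) + 2%:R * (y1 s) * (y3 s).
Definition al2 (s : st) : R := 2%:R * (x0 s) * (y2 s) + 2%:R * (x1 s) * (y3 s) - 2%:R * (x2 s) * (y0 s) - 2%:R * (x3 s) * (y1 s).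
Definition al3 (s : st) : R := (x0 s)^+2 + (x1 s)^+2 - (x2 s)^+2 - (x3 s)^+2 + (y0 s)^+2 + (y1 s)^+2 - (y2 s)^+2 - (y3 s)^+2.
Definition be1 (s : st) : R := 2%:R * (x0 s) * (x1 s) + 2%:R * (x2 s) * (x3 s) + 2%:R * (y0 s) * (y1 s) + 2%:R * (y2 s) * (y3 s).
Definition be2 (s : st) : R := 2%:R * (x0 s) * (y1 s) - 2%:R * (x1 s) * (y0 s) + 2%:R * (x2 s) * (y3 s) - 2%:R * (x3 s) * (y2 s).
Definition be3 (s : st) : R := (x0 s)^+2 - (x1 s)^+2 + (x2 s)^+2 - (x3 s)^+2 + (y0 s)^+2 - (y1 s)^+2 + (y2 s)^+2 - (y3 s)^+2.
Definition c11 (s : st) : R := 2%:R * (x0 s) * (x3 s) + 2%:R * (x1 s) * (x2 s) + 2%:R * (y0 s) * (y3 s) + 2%:R * (y1 s) * (y2 s).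
Definition c12 (s : st) : R := 2%:R * (x0 s) * (y3 s) - 2%:R * (x1 s) * (y2 s) + 2%:R * (x2 s) * (y1 s) - 2%:R * (x3 s) * (y0 s).
Definition c13 (s : st) : R := 2%:R * (x0 s) * (x2 s) - 2%:R * (x1 s) * (x3 s) + 2%:R * (y0 s) * (y2 s) - 2%:R * (y1 s) * (y3 s).
Definition c21 (s : st) : R := 2%:R * (x0 s) * (y3 s) + 2%:R * (x1 s) * (y2 s) - 2%:R * (x2 s) * (y1 s) - 2%:R * (x3 s) * (y0 s).
Definition c22 (s : st) : R := - 2%:R * (x0 s) * (x3 s) + 2%:R * (x1 s) * (x2 s) - 2%:R * (y0 s) * (y3 s) + 2%:R * (y1 s) * (y2 s).
Definition c23 (s : st) : R := 2%:R * (x0 s) * (y2 s) - 2%:R * (x1 s) * (y3 s) - 2%:R * (x2 s) * (y0 s) + 2%:R * (x3 s) * (y1 s).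
Definition c31 (s : st) : R := 2%:R * (x0 s) * (x1 s) - 2%:R * (x2 s) * (x3 s) + 2%:R * (y0 s) * (y1 s) - 2%:R * (y2 s) * (y3 s).
Definition c32 (s : st) : R := 2%:R * (x0 s) * (y1 s) - 2%:R * (x1 s) * (y0 s) - 2%:R * (x2 s) * (y3 s) + 2%:R * (x3 s) * (y2 s).
Definition c33 (s : st) : R := (x0 s)^+2 - (x1 s)^+2 - (x2 s)^+2 + (x3 s)^+2 + (y0 s)^+2 - (y1 s)^+2 - (y2 s)^+2 + (y3 s)^+2.
Definition Bv (s : st) (i : nat) : R :=
  match i with
  | 1%N => nrm s
  | 2%N => al1 s
  | 3%N => al2 s
  | 4%N => al3 s
  | 5%N => be1 s
  | 6%N => be2 s
  | 7%N => be3 s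
  | 8%N => c11 s
  | 9%N => c12 s
  | 10%N => c13 s
  | 11%N => c21 s
  | 12%N => c22 s
  | 13%N => c23 s
  | 14%N => c31 s
  | 15%N => c32 s
  | 16%N => c33 s
  | _ => 0 end.

Definition tost (psi : qvec R) : st :=
  St (complex.Re (psi ord0 ord0)) (complex.Re (psi ord0 ord_max))
     (complex.Re (psi ord_max ord0)) (complex.Re (psi ord_max ord_max))
     (complex.Im (psi ord0 ord0)) (complex.Im (psi ord0 ord_max))
     (complex.Im (psi ord_max ord0)) (complex.Im (psi ord_max ord_max)).

Definition ofst (s : st) : qvec R := fun a b =>
  if val a == 0%N then (if val b == 0%N then (x0 s +i* y0 s)%C else (x1 s +i* y1 s)%C)
  else (if val b == 0%N then (x2 s +i* y2 s)%C else (x3 s +i* y3 s)%C).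

Lemma tost_ofst s : tost (ofst s) = s.
Proof. by case: s. Qed.

Lemma conjE (a b : R) : Num.conj (a +i* b)%C = (a -i* b)%C.
Proof. reflexivity. Qed.

Lemma sum2 (F : 'I_2 -> C) : \sum_(a < 2) F a = F ord0 + F ord_max.
Proof. rewrite !big_ord_recr big_ord0 /= add0r; congr (F _ + F _); exact/val_inj. Qed.

Ltac expand psi :=
  rewrite /bloch /bloch_obs /= /tr_obs /rho !sum2 /sigma /= /tost /=;
  case: (psi ord0 ord0) => [a0 b0]; case: (psi ord0 ord_max) => [a1 b1];
  case: (psi ord_max ord0) => [a2 b2]; case: (psi ord_max ord_max) => [a3 b3];
  rewrite !conjE; simpc; rewrite /=.

Lemma bloch_1 psi : bloch psi 1 = Bv (tost psi) 1.
Proof. expand psi. rewrite /nrm /=. ring. Qed.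
Lemma bloch_2 psi : bloch psi 2 = Bv (tost psi) 2.
Proof. expand psi. rewrite /al1 /=. ring. Qed.
Lemma bloch_3 psi : bloch psi 3 = Bv (tost psi) 3.
Proof. expand psi. rewrite /al2 /=. ring. Qed.
Lemma bloch_4 psi : bloch psi 4 = Bv (tost psi) 4.
Proof. expand psi. rewrite /al3 /=. ring. Qed.
Lemma bloch_5 psi : bloch psi 5 = Bv (tost psi) 5.
Proof. expand psi. rewrite /be1 /=. ring. Qed.
Lemma bloch_6 psi : bloch psi 6 = Bv (tost psi) 6.
Proof. expand psi. rewrite /be2 /=. ring. Qed.
Lemma bloch_7 psi : bloch psi 7 = Bv (tost psi) 7.
Proof. expand psi. rewrite /be3 /=. ring. Qed.
Lemma bloch_8 psi : bloch psi 8 = Bv (tost psi) 8.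
Proof. expand psi. rewrite /c11 /=. ring. Qed.
Lemma bloch_9 psi : bloch psi 9 = Bv (tost psi) 9.
Proof. expand psi. rewrite /c12 /=. ring. Qed.
Lemma bloch_10 psi : bloch psi 10 = Bv (tost psi) 10.
Proof. expand psi. rewrite /c13 /=. ring. Qed.
Lemma bloch_11 psi : bloch psi 11 = Bv (tost psi) 11.
Proof. expand psi. rewrite /c21 /=. ring. Qed.
Lemma bloch_12 psi : bloch psi 12 = Bv (tost psi) 12.
Proof. expand psi. rewrite /c22 /=. ring. Qed.
Lemma bloch_13 psi : bloch psi 13 = Bv (tost psi) 13.
Proof. expand psi. rewrite /c23 /=. ring. Qed.
Lemma bloch_14 psi : bloch psi 14 = Bv (tost psi) 14.
Proof. expand psi. rewrite /c31 /=. ring. Qed.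
Lemma bloch_15 psi : bloch psi 15 = Bv (tost psi) 15.
Proof. expand psi. rewrite /c32 /=. ring. Qed.
Lemma bloch_16 psi : bloch psi 16 = Bv (tost psi) 16.
Proof. expand psi. rewrite /c33 /=. ring. Qed.
Lemma bloch_Bv psi i : (0 < i <= 16)%N -> bloch psi i = Bv (tost psi) i.
Proof.
case: i => [|[|[|[|[|[|[|[|[|[|[|[|[|[|[|[|[|i]]]]]]]]]]]]]]]]] // _.
- exact: bloch_1.
- exact: bloch_2.
- exact: bloch_3.
- exact: bloch_4.
- exact: bloch_5.
- exact: bloch_6.
- exact: bloch_7.
- exact: bloch_8.
- exact: bloch_9.
- exact: bloch_10.
- exact: bloch_11.
- exact: bloch_12.
- exact: bloch_13.
- exact: bloch_14.
- exact: bloch_15.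
- exact: bloch_16.
Qed.
Lemma pure_nrm psi : is_pure psi <-> nrm (tost psi) = 1.
Proof.
rewrite /is_pure !sum2 /nrm /tost /=.
case: (psi ord0 ord0) => [a0 b0]; case: (psi ord0 ord_max) => [a1 b1];
case: (psi ord_max ord0) => [a2 b2]; case: (psi ord_max ord_max) => [a3 b3].
rewrite !conjE; simpc; rewrite /=; split.
  by move=> [<- _]; ring.
move=> H; apply/eqP; rewrite eq_complex /=; apply/andP; split; apply/eqP.
  by rewrite -H; ring.
ring.
Qed.
End S.

Section S2.
Variable R : realType.
Local Notation st := (st R).
Definition pA (n1 n2 n3 : R) (s : st) : st :=
  St (n3 * x0 s + n1 * x2 s + n2 * y2 s) (n3 * x1 s + n1 * x3 s + n2 * y3 s)
     (n1 * x0 s - n2 * y0 s - n3 * x2 s) (n1 * x1 s - n2 * y1 s - n3 * x3 s)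
     (n3 * y0 s + n1 * y2 s - n2 * x2 s) (n3 * y1 s + n1 * y3 s - n2 * x3 s)
     (n1 * y0 s + n2 * x0 s - n3 * y2 s) (n1 * y1 s + n2 * x1 s - n3 * y3 s).
Definition pB (n1 n2 n3 : R) (s : st) : st :=
  St (n3 * x0 s + n1 * x1 s + n2 * y1 s) (n1 * x0 s - n2 * y0 s - n3 * x1 s)
     (n3 * x2 s + n1 * x3 s + n2 * y3 s) (n1 * x2 s - n2 * y2 s - n3 * x3 s)
     (n3 * y0 s + n1 * y1 s - n2 * x1 s) (n1 * y0 s + n2 * x0 s - n3 * y1 s)
     (n3 * y2 s + n1 * y3 s - n2 * x3 s) (n1 * y2 s + n2 * x2 s - n3 * y3 s).
Definition sf (s : st) : st :=
  St (- x3 s) (x2 s) (x1 s) (- x0 s) (y3 s) (- y2 s) (- y1 s) (y0 s).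
Definition sc (l : R) (s : st) : st :=
  St (l * x0 s) (l * x1 s) (l * x2 s) (l * x3 s) (l * y0 s) (l * y1 s) (l * y2 s) (l * y3 s).
Definition TA (n1 n2 n3 : R) (b : nat -> R) (i : nat) : R :=
  match i with
  | 1%N => ((n1)^+2 + (n2)^+2 + (n3)^+2) * b 1%N
  | 2%N => 2%:R * ((n1) * b 2%N + (n2) * b 3%N + (n3) * b 4%N) * (n1) - ((n1)^+2 + (n2)^+2 + (n3)^+2) * b 2%N
  | 3%N => 2%:R * ((n1) * b 2%N + (n2) * b 3%N + (n3) * b 4%N) * (n2) - ((n1)^+2 + (n2)^+2 + (n3)^+2) * b 3%N
  | 4%N => 2%:R * ((n1) * b 2%N + (n2) * b 3%N + (n3) * b 4%N) * (n3) - ((n1)^+2 + (n2)^+2 + (n3)^+2) * b 4%N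
  | 5%N => ((n1)^+2 + (n2)^+2 + (n3)^+2) * b 5%N
  | 6%N => ((n1)^+2 + (n2)^+2 + (n3)^+2) * b 6%N
  | 7%N => ((n1)^+2 + (n2)^+2 + (n3)^+2) * b 7%N
  | 8%N => 2%:R * (n1) * ((n1) * b 8%N + (n2) * b 11%N + (n3) * b 14%N) - ((n1)^+2 + (n2)^+2 + (n3)^+2) * b 8%N
  | 9%N => 2%:R * (n1) * ((n1) * b 9%N + (n2) * b 12%N + (n3) * b 15%N) - ((n1)^+2 + (n2)^+2 + (n3)^+2) * b 9%N
  | 10%N => 2%:R * (n1) * ((n1) * b 10%N + (n2) * b 13%N + (n3) * b 16%N) - ((n1)^+2 + (n2)^+2 + (n3)^+2) * b 10%N
  | 11%N => 2%:R * (n2) * ((n1) * b 8%N + (n2) * b 11%N + (n3) * b 14%N) - ((n1)^+2 + (n2)^+2 + (n3)^+2) * b 11%N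
  | 12%N => 2%:R * (n2) * ((n1) * b 9%N + (n2) * b 12%N + (n3) * b 15%N) - ((n1)^+2 + (n2)^+2 + (n3)^+2) * b 12%N
  | 13%N => 2%:R * (n2) * ((n1) * b 10%N + (n2) * b 13%N + (n3) * b 16%N) - ((n1)^+2 + (n2)^+2 + (n3)^+2) * b 13%N
  | 14%N => 2%:R * (n3) * ((n1) * b 8%N + (n2) * b 11%N + (n3) * b 14%N) - ((n1)^+2 + (n2)^+2 + (n3)^+2) * b 14%N
  | 15%N => 2%:R * (n3) * ((n1) * b 9%N + (n2) * b 12%N + (n3) * b 15%N) - ((n1)^+2 + (n2)^+2 + (n3)^+2) * b 15%N
  | 16%N => 2%:R * (n3) * ((n1) * b 10%N + (n2) * b 13%N + (n3) * b 16%N) - ((n1)^+2 + (n2)^+2 + (n3)^+2) * b 16%N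
  | _ => 0 end.
Definition TB (n1 n2 n3 : R) (b : nat -> R) (i : nat) : R :=
  match i with
  | 1%N => ((n1)^+2 + (n2)^+2 + (n3)^+2) * b 1%N
  | 2%N => ((n1)^+2 + (n2)^+2 + (n3)^+2) * b 2%N
  | 3%N => ((n1)^+2 + (n2)^+2 + (n3)^+2) * b 3%N
  | 4%N => ((n1)^+2 + (n2)^+2 + (n3)^+2) * b 4%N
  | 5%N => 2%:R * ((n1) * b 5%N + (n2) * b 6%N + (n3) * b 7%N) * (n1) - ((n1)^+2 + (n2)^+2 + (n3)^+2) * b 5%N
  | 6%N => 2%:R * ((n1) * b 5%N + (n2) * b 6%N + (n3) * b 7%N) * (n2) - ((n1)^+2 + (n2)^+2 + (n3)^+2) * b 6%N
  | 7%N => 2%:R * ((n1) * b 5%N + (n2) * b 6%N + (n3) * b 7%N) * (n3) - ((n1)^+2 + (n2)^+2 + (n3)^+2) * b 7%N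
  | 8%N => 2%:R * (n1) * ((n1) * b 8%N + (n2) * b 9%N + (n3) * b 10%N) - ((n1)^+2 + (n2)^+2 + (n3)^+2) * b 8%N
  | 9%N => 2%:R * (n2) * ((n1) * b 8%N + (n2) * b 9%N + (n3) * b 10%N) - ((n1)^+2 + (n2)^+2 + (n3)^+2) * b 9%N
  | 10%N => 2%:R * (n3) * ((n1) * b 8%N + (n2) * b 9%N + (n3) * b 10%N) - ((n1)^+2 + (n2)^+2 + (n3)^+2) * b 10%N
  | 11%N => 2%:R * (n1) * ((n1) * b 11%N + (n2) * b 12%N + (n3) * b 13%N) - ((n1)^+2 + (n2)^+2 + (n3)^+2) * b 11%N
  | 12%N => 2%:R * (n2) * ((n1) * b 11%N + (n2) * b 12%N + (n3) * b 13%N) - ((n1)^+2 + (n2)^+2 + (n3)^+2) * b 12%N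
  | 13%N => 2%:R * (n3) * ((n1) * b 11%N + (n2) * b 12%N + (n3) * b 13%N) - ((n1)^+2 + (n2)^+2 + (n3)^+2) * b 13%N
  | 14%N => 2%:R * (n1) * ((n1) * b 14%N + (n2) * b 15%N + (n3) * b 16%N) - ((n1)^+2 + (n2)^+2 + (n3)^+2) * b 14%N
  | 15%N => 2%:R * (n2) * ((n1) * b 14%N + (n2) * b 15%N + (n3) * b 16%N) - ((n1)^+2 + (n2)^+2 + (n3)^+2) * b 15%N
  | 16%N => 2%:R * (n3) * ((n1) * b 14%N + (n2) * b 15%N + (n3) * b 16%N) - ((n1)^+2 + (n2)^+2 + (n3)^+2) * b 16%N
  | _ => 0 end.
Definition Tsf  (b : nat -> R) (i : nat) : R :=
  match i with
  | 1%N => b 1%N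
  | 2%N => - b 2%N
  | 3%N => - b 3%N
  | 4%N => - b 4%N
  | 5%N => - b 5%N
  | 6%N => - b 6%N
  | 7%N => - b 7%N
  | 8%N => b 8%N
  | 9%N => b 9%N
  | 10%N => b 10%N
  | 11%N => b 11%N
  | 12%N => b 12%N
  | 13%N => b 13%N
  | 14%N => b 14%N
  | 15%N => b 15%N
  | 16%N => b 16%N
  | _ => 0 end.
Definition Tsc (l : R) (b : nat -> R) (i : nat) : R :=
  match i with
  | 1%N => l^+2 * b 1%N
  | 2%N => l^+2 * b 2%N
  | 3%N => l^+2 * b 3%N
  | 4%N => l^+2 * b 4%N
  | 5%N => l^+2 * b 5%N
  | 6%N => l^+2 * b 6%N
  | 7%N => l^+2 * b 7%N
  | 8%N => l^+2 * b 8%N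
  | 9%N => l^+2 * b 9%N
  | 10%N => l^+2 * b 10%N
  | 11%N => l^+2 * b 11%N
  | 12%N => l^+2 * b 12%N
  | 13%N => l^+2 * b 13%N
  | 14%N => l^+2 * b 14%N
  | 15%N => l^+2 * b 15%N
  | 16%N => l^+2 * b 16%N
  | _ => 0 end.

Ltac unf := rewrite /nrm /al1 /al2 /al3 /be1 /be2 /be3 /c11 /c12 /c13 /c21 /c22 /c23 /c31 /c32 /c33 /=.

Lemma Bv_pA n1 n2 n3 s i : Bv (pA n1 n2 n3 s) i = TA n1 n2 n3 (Bv s) i.
Proof.
case: i => [|[|[|[|[|[|[|[|[|[|[|[|[|[|[|[|[|i]]]]]]]]]]]]]]]]] //=; unf; ring.
Qed.
Lemma Bv_pB n1 n2 n3 s i : Bv (pB n1 n2 n3 s) i = TB n1 n2 n3 (Bv s) i.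
Proof.
case: i => [|[|[|[|[|[|[|[|[|[|[|[|[|[|[|[|[|i]]]]]]]]]]]]]]]]] //=; unf; ring.
Qed.
Lemma Bv_sf s i : Bv (sf s) i = Tsf (Bv s) i.
Proof.
case: i => [|[|[|[|[|[|[|[|[|[|[|[|[|[|[|[|[|i]]]]]]]]]]]]]]]]] //=; unf; ring.
Qed.
Lemma Bv_sc l s i : Bv (sc l s) i = Tsc l (Bv s) i.
Proof.
case: i => [|[|[|[|[|[|[|[|[|[|[|[|[|[|[|[|[|i]]]]]]]]]]]]]]]]] //=; unf; ring.
Qed.
End S2.

Section S3.
Variable R : realType.
Local Notation st := (st R).
Implicit Types (b : nat -> R).

Definition An b := b 2%N ^+ 2 + b 3%N ^+ 2 + b 4%N ^+ 2.
Definition Bn b := b 5%N ^+ 2 + b 6%N ^+ 2 + b 7%N ^+ 2.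
Definition Qn b := b 3%N ^+ 2 + b 4%N ^+ 2.
Definition bx1 b := b 6%N * b 10%N - b 7%N * b 9%N.
Definition bx2 b := b 7%N * b 8%N - b 5%N * b 10%N.
Definition bx3 b := b 5%N * b 9%N - b 6%N * b 8%N.

Record pureB b : Prop := PureB {
  pN : b 1%N = 1;
  pCb1 : b 8%N * b 5%N + b 9%N * b 6%N + b 10%N * b 7%N = b 2%N;
  pCb2 : b 11%N * b 5%N + b 12%N * b 6%N + b 13%N * b 7%N = b 3%N;
  pCb3 : b 14%N * b 5%N + b 15%N * b 6%N + b 16%N * b 7%N = b 4%N;
  pCa1 : b 8%N * b 2%N + b 11%N * b 3%N + b 14%N * b 4%N = b 5%N;
  pCa2 : b 9%N * b 2%N + b 12%N * b 3%N + b 15%N * b 4%N = b 6%N;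
  pCa3 : b 10%N * b 2%N + b 13%N * b 3%N + b 16%N * b 4%N = b 7%N;
  pR1 : b 8%N ^+ 2 + b 9%N ^+ 2 + b 10%N ^+ 2 = 1 - An b + b 2%N ^+ 2;
  pR2 : b 11%N ^+ 2 + b 12%N ^+ 2 + b 13%N ^+ 2 = 1 - An b + b 3%N ^+ 2;
  pR3 : b 14%N ^+ 2 + b 15%N ^+ 2 + b 16%N ^+ 2 = 1 - An b + b 4%N ^+ 2;
  pR12 : b 8%N * b 11%N + b 9%N * b 12%N + b 10%N * b 13%N = b 2%N * b 3%N;
  pR13 : b 8%N * b 14%N + b 9%N * b 15%N + b 10%N * b 16%N = b 2%N * b 4%N;
  pR23 : b 11%N * b 14%N + b 12%N * b 15%N + b 13%N * b 16%N = b 3%N * b 4%N;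
  pAB : An b = Bn b;
  pA1 : An b <= 1;
  pX1 : b 14%N = b 4%N * b 5%N - (b 9%N * b 13%N - b 10%N * b 12%N);
  pX2 : b 15%N = b 4%N * b 6%N - (b 10%N * b 11%N - b 8%N * b 13%N);
  pX3 : b 16%N = b 4%N * b 7%N - (b 8%N * b 12%N - b 9%N * b 11%N);
  pQ1 : Qn b * b 11%N = b 3%N * b 5%N - b 4%N * bx1 b - b 2%N * b 3%N * b 8%N;
  pQ2 : Qn b * b 12%N = b 3%N * b 6%N - b 4%N * bx2 b - b 2%N * b 3%N * b 9%N;
  pQ3 : Qn b * b 13%N = b 3%N * b 7%N - b 4%N * bx3 b - b 2%N * b 3%N * b 10%N
}.

Ltac unf3 := rewrite /nrm /al1 /al2 /al3 /be1 /be2 /be3 /c11 /c12 /c13 /c21 /c22 /c23 /c31 /c32 /c33 /=.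

Lemma pure_pureB s : nrm s = 1 -> pureB (Bv s).
Proof.
move=> N1.
have hom : forall (p q : R), p = q * nrm s -> p = q by move=> p q ->; rewrite N1 mulr1.
have hom' : forall (p q : R), p * nrm s = q -> p = q by move=> p q <-; rewrite N1 mulr1.
have one2 : (1 : R) = nrm s ^+ 2 by rewrite N1 expr1n.
constructor; rewrite /An /Bn /Qn /bx1 /bx2 /bx3 /=.
- exact: N1.
- apply: hom; unf3; ring.
- apply: hom; unf3; ring.
- apply: hom; unf3; ring.
- apply: hom; unf3; ring.
- apply: hom; unf3; ring.
- apply: hom; unf3; ring.
- rewrite one2; unf3; ring.
- rewrite one2; unf3; ring.
- rewrite one2; unf3; ring.
- unf3; ring.
- unf3; ring.
- unf3; ring.
- unf3; ring.
- set dr := x0 s * x3 s - y0 s * y3 s - (x1 s * x2 s - y1 s * y2 s).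
  set di := x0 s * y3 s + y0 s * x3 s - (x1 s * y2 s + y1 s * x2 s).
  have -> : al1 s ^+ 2 + al2 s ^+ 2 + al3 s ^+ 2 = nrm s ^+ 2 - 4%:R * (dr ^+ 2 + di ^+ 2).
    by rewrite /dr /di; unf3; ring.
  rewrite N1 expr1n lerBlDr lerDl; apply: mulr_ge0 => //; apply: addr_ge0; exact: sqr_ge0.
- apply: hom'; unf3; ring.
- apply: hom'; unf3; ring.
- apply: hom'; unf3; ring.
- have H : (al2 s ^+ 2 + al3 s ^+ 2) * c21 s = al2 s * be1 s * nrm s - al3 s * (be2 s * c13 s - be3 s * c12 s) - al1 s * al2 s * c11 s by unf3; ring.
  by rewrite H N1 mulr1.
- have H : (al2 s ^+ 2 + al3 s ^+ 2) * c22 s = al2 s * be2 s * nrm s - al3 s * (be3 s * c11 s - be1 s * c13 s) - al1 s * al2 s * c12 s by unf3; ring.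
  by rewrite H N1 mulr1.
- have H : (al2 s ^+ 2 + al3 s ^+ 2) * c23 s = al2 s * be3 s * nrm s - al3 s * (be1 s * c12 s - be2 s * c11 s) - al1 s * al2 s * c13 s by unf3; ring.
  by rewrite H N1 mulr1.
Qed.

Lemma BvpA (n1 n2 n3 : R) (s : st) : Bv (pA n1 n2 n3 s) = TA n1 n2 n3 (Bv s).
Proof. by apply: boolp.funext => i; exact: Bv_pA. Qed.
Lemma BvpB (n1 n2 n3 : R) (s : st) : Bv (pB n1 n2 n3 s) = TB n1 n2 n3 (Bv s).
Proof. by apply: boolp.funext => i; exact: Bv_pB. Qed.
Lemma Bvsf (s : st) : Bv (sf s) = Tsf (Bv s).
Proof. by apply: boolp.funext => i; exact: Bv_sf. Qed.
Lemma Bvsc (l : R) (s : st) : Bv (sc l s) = Tsc l (Bv s).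
Proof. by apply: boolp.funext => i; exact: Bv_sc. Qed.

End S3.

Section S4.
Local Open Scope classical_set_scope.
Variable R : realType.
Local Notation st := (st R).
Implicit Types (b : nat -> R).

Lemma pureB_bound b i : pureB b -> (2 <= i <= 16)%N -> b i ^+ 2 <= 1.
Proof.
move=> P; have := pA1 P; have := pAB P; have := pR1 P; have := pR2 P; have := pR3 P.
rewrite /An /Bn => h1 h2 h3 h4 h5.
have s := fun k => sqr_ge0 (b k).
case: i => [|[|[|[|[|[|[|[|[|[|[|[|[|[|[|[|[|i]]]]]]]]]]]]]]]]] //= _.
all: try by (have := s 2%N; have := s 3%N; have := s 4%N; have := s 5%N; have := s 6%N; have := s 7%N;
  have := s 8%N; have := s 9%N; have := s 10%N; have := s 11%N; have := s 12%N; have := s 13%N;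
  have := s 14%N; have := s 15%N; have := s 16%N; lra).
Qed.

Lemma pureB_le1 b i : pureB b -> (2 <= i <= 16)%N -> -1 <= b i <= 1.
Proof. move=> P hi; have := pureB_bound P hi => h; apply/andP; split; nra. Qed.

Lemma compatP (psi : qvec R) i v : (2 <= i <= 16)%N ->
  compat_values psi i v <->
  exists s : st, [/\ nrm s = 1, (forall k, (1 <= k < i)%N -> Bv s k = Bv (tost psi) k) & v = Bv s i].
Proof.
move=> /andP [i2 i16]; split.
- case=> phi [Pphi Hpre] <-; exists (tost phi); split.
  + exact/pure_nrm.
  + move=> k /andP [k1 ki]; rewrite -!bloch_Bv ?Hpre //; apply/andP; split => //;
      exact: leq_trans (ltnW ki) i16.
  + by rewrite bloch_Bv // i16 andbT; exact: leq_trans i2.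
- case=> s [Ns Hpre ->]; exists (ofst s); last first.
    by rewrite bloch_Bv ?tost_ofst // i16 andbT; exact: leq_trans i2.
  split; first by apply/pure_nrm; rewrite tost_ofst.
  move=> k /andP [k1 ki]; rewrite !bloch_Bv ?tost_ofst ?Hpre //; apply/andP; split => //;
    exact: leq_trans (ltnW ki) i16.
Qed.

Lemma hmid_eq (psi : qvec R) (i : nat) (c : R) :
  is_pure psi -> (2 <= i <= 16)%N ->
  (forall s : st, nrm s = 1 -> (forall k, (1 <= k < i)%N -> Bv s k = Bv (tost psi) k) ->
     exists s' : st, [/\ nrm s' = 1, (forall k, (1 <= k < i)%N -> Bv s' k = Bv s k) &
                        Bv s' i = 2%:R * c - Bv s i]) ->
  hmid psi i = c.
Proof.
move=> Ppsi hi Hsym.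
set S := compat_values psi i.
have mem0 : S (Bv (tost psi) i).
  by apply/(compatP _ _ hi); exists (tost psi); split => //; exact/pure_nrm.
have ne : S !=set0 by exists (Bv (tost psi) i).
have bnd : forall v, S v -> -1 <= v <= 1.
  move=> v /(compatP _ _ hi) [s [Ns _ ->]]; exact: pureB_le1 (pure_pureB Ns) hi.
have sym : forall v, S v -> S (2%:R * c - v).
  move=> v /(compatP _ _ hi) [s [Ns Hpre ->]].
  have [s' [Ns' Hpre' Hv]] := Hsym s Ns Hpre.
  apply/(compatP _ _ hi); exists s'; split => //.
  by move=> k hk; rewrite Hpre' ?Hpre.
have hub : has_ubound S by exists 1 => v /bnd /andP [].
have hlb : has_lbound S by exists (-1) => v /bnd /andP [].
have e1 : sup S <= 2%:R * c - inf S.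
  apply: ge_sup => // v Sv.
  have := ge_inf hlb (sym v Sv); lra.
have e2 : 2%:R * c - sup S <= inf S.
  apply: lb_le_inf => // v Sv.
  have := ub_le_sup hub (sym v Sv); lra.
rewrite /hmid /bmax /bmin -/S; lra.
Qed.

End S4.

Section S5.
Variable R : realType.
Local Notation st := (st R).
Implicit Types (b : nat -> R).

Definition cfun (i : nat) b : R :=
  match i with
  | 8%N => b 2%N * b 5%N / Bn b
  | 9%N => b 6%N * (b 2%N - b 5%N * b 8%N) / (b 6%N ^+ 2 + b 7%N ^+ 2)
  | 10%N => (b 2%N - b 5%N * b 8%N - b 6%N * b 9%N) / b 7%N
  | 11%N => (b 3%N * b 5%N - b 4%N * bx1 b - b 2%N * b 3%N * b 8%N) / Qn b
  | 12%N => if Qn b != 0 then (b 3%N * b 6%N - b 4%N * bx2 b - b 2%N * b 3%N * b 9%N) / Qn b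
            else - (b 8%N * b 9%N * b 11%N) / (b 9%N ^+ 2 + b 10%N ^+ 2)
  | 13%N => if Qn b != 0 then (b 3%N * b 7%N - b 4%N * bx3 b - b 2%N * b 3%N * b 10%N) / Qn b
            else - (b 8%N * b 11%N + b 9%N * b 12%N) / b 10%N
  | 14%N => b 4%N * b 5%N - (b 9%N * b 13%N - b 10%N * b 12%N)
  | 15%N => b 4%N * b 6%N - (b 10%N * b 11%N - b 8%N * b 13%N)
  | 16%N => b 4%N * b 7%N - (b 8%N * b 12%N - b 9%N * b 11%N)
  | _ => 0
  end.

Lemma cfun_pre i b b' : (forall k, (1 <= k < i)%N -> b k = b' k) -> cfun i b = cfun i b'.
Proof.
move=> H.
case: i H => [|[|[|[|[|[|[|[|[|[|[|[|[|[|[|[|[|i]]]]]]]]]]]]]]]]] H //=;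
rewrite /Bn /Qn /bx1 /bx2 /bx3;
rewrite ?(H 2%N) ?(H 3%N) ?(H 4%N) ?(H 5%N) ?(H 6%N) ?(H 7%N) ?(H 8%N) ?(H 9%N)
        ?(H 10%N) ?(H 11%N) ?(H 12%N) ?(H 13%N) ?(H 14%N) ?(H 15%N) //.
Qed.

Definition symP (i : nat) := forall s : st, nrm s = 1 ->
  exists s' : st, [/\ nrm s' = 1, (forall k, (1 <= k < i)%N -> Bv s' k = Bv s k) &
                     Bv s' i = 2%:R * cfun i (Bv s) - Bv s i].

Lemma sqrtV2 (M : R) : 0 <= M -> ((Num.sqrt M)^-1) ^+ 2 = M^-1.
Proof. by move=> h; rewrite exprVn sqr_sqrtr. Qed.

Ltac pre := move=> [|[|[|[|[|[|[|[|[|[|[|[|[|[|[|[|[|?]]]]]]]]]]]]]]]]] /andP [] // _ _.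

Ltac gen s P := rewrite ?(BvpA, BvpB, Bvsf, Bvsc); move: (Bv s) P => b P /=; rewrite /An /Bn /Qn /bx1 /bx2 /bx3.
Ltac nrmB := rewrite -[nrm _]/(Bv _ 1%N).

Lemma sym2 : symP 2.
Proof.
move=> s Ns; have P := pure_pureB Ns; exists (pA 0 0 1 s); split.
- nrmB; gen s P; rewrite (pN P); ring.
- pre; gen s P; rewrite (pN P); ring.
- gen s P; ring.
Qed.

Lemma sym3 : symP 3.
Proof.
move=> s Ns; have P := pure_pureB Ns; exists (pA 1 0 0 s); split.
- nrmB; gen s P; rewrite (pN P); ring.
- pre; gen s P; rewrite ?(pN P); ring.
- gen s P; ring.
Qed.

Lemma sym4 : symP 4.
Proof.
move=> s Ns; have P := pure_pureB Ns; exists (pA 0 0 1 (sf s)); split.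
- nrmB; gen s P; rewrite (pN P); ring.
- pre; gen s P; rewrite ?(pN P); ring.
- gen s P; ring.
Qed.

Lemma sym5 : symP 5.
Proof.
move=> s Ns; have P := pure_pureB Ns; exists (pB 0 0 1 s); split.
- nrmB; gen s P; rewrite (pN P); ring.
- pre; gen s P; rewrite ?(pN P); ring.
- gen s P; ring.
Qed.

Lemma sym6 : symP 6.
Proof.
move=> s Ns; have P := pure_pureB Ns; exists (pB 1 0 0 s); split.
- nrmB; gen s P; rewrite (pN P); ring.
- pre; gen s P; rewrite ?(pN P); ring.
- gen s P; ring.
Qed.

Lemma sq0 (x y : R) : x ^+ 2 + y ^+ 2 = 0 -> x = 0 /\ y = 0.
Proof. move=> h; split; nra. Qed.
Lemma sq30 (x y z : R) : x ^+ 2 + y ^+ 2 + z ^+ 2 = 0 -> [/\ x = 0, y = 0 & z = 0].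
Proof. move=> h; split; nra. Qed.

Lemma sym7 : symP 7.
Proof.
move=> s Ns; have P := pure_pureB Ns.
have [h0|h0] := eqVneq (Bv s 5 ^+ 2 + Bv s 6 ^+ 2) 0.
- have [e5 e6] := sq0 h0; exists (pB 1 0 0 s); split.
  + nrmB; gen s P; rewrite (pN P); ring.
  + pre; move: e5 e6; gen s P; move=> e5 e6; rewrite ?(pN P) ?e5 ?e6; ring.
  + move: e5 e6; gen s P; move=> e5 e6; rewrite ?e5 ?e6; ring.
- have M0 : 0 < Bv s 5 ^+ 2 + Bv s 6 ^+ 2 by rewrite lt_def h0 addr_ge0 ?sqr_ge0.
  exists (sc (Num.sqrt (Bv s 5 ^+ 2 + Bv s 6 ^+ 2))^-1 (pB (Bv s 5) (Bv s 6) 0 s)); split.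
  + nrmB; move: M0; gen s P; move=> M0; rewrite sqrtV2 ?ltW // (pN P).
    field; exact: lt0r_neq0.
  + pre; move: M0; gen s P; move=> M0; rewrite sqrtV2 ?ltW // ?(pN P); field; exact: lt0r_neq0.
  + move: M0; gen s P; move=> M0; rewrite sqrtV2 ?ltW //; field; exact: lt0r_neq0.
Qed.

Lemma sym8 : symP 8.
Proof.
move=> s Ns; have P := pure_pureB Ns.
have [h0|h0] := eqVneq (Bv s 5 ^+ 2 + Bv s 6 ^+ 2 + Bv s 7 ^+ 2) 0.
- have [e5 e6 e7] := sq30 h0; exists (pB 0 0 1 s); split.
  + nrmB; gen s P; rewrite (pN P); ring.
  + pre; move: e5 e6 e7; gen s P; move=> e5 e6 e7; rewrite ?(pN P) ?e5 ?e6 ?e7; ring.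
  + move: e5 e6 e7; gen s P; move=> e5 e6 e7; rewrite ?e5 ?e6 ?e7; ring.
- have M0 : 0 < Bv s 5 ^+ 2 + Bv s 6 ^+ 2 + Bv s 7 ^+ 2 by rewrite lt_def h0 !addr_ge0 ?sqr_ge0.
  exists (sc (Num.sqrt (Bv s 5 ^+ 2 + Bv s 6 ^+ 2 + Bv s 7 ^+ 2))^-1 (pB (Bv s 5) (Bv s 6) (Bv s 7) s)); split.
  + nrmB; move: M0; gen s P; move=> M0; rewrite sqrtV2 ?ltW // (pN P).
    field; exact: lt0r_neq0.
  + pre; move: M0; gen s P; move=> M0; rewrite sqrtV2 ?ltW // ?(pN P); field; exact: lt0r_neq0.
  + move: M0; gen s P; move=> M0; rewrite sqrtV2 ?ltW // -(pCb1 P); field; exact: lt0r_neq0.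
Qed.

Ltac fld := field; do ?[apply/andP; split]; try done; try assumption.

Lemma antiW b (a2 a3 m2 m3 l : R) :
  a2 * b 3%N + a3 * b 4%N = 0 -> m2 * b 6%N + m3 * b 7%N = 0 ->
  a2 ^+ 2 + a3 ^+ 2 != 0 -> m2 ^+ 2 + m3 ^+ 2 != 0 ->
  l ^+ 2 = ((a2 ^+ 2 + a3 ^+ 2) * (m2 ^+ 2 + m3 ^+ 2))^-1 ->
  let W := Tsc l (TA 0 a2 a3 (TB 0 m2 m3 (Tsf b))) in
  [/\ forall k, (1 <= k <= 8)%N -> W k = b k,
      W 9%N = b 9%N - 2%:R * m2 * (m2 * b 9%N + m3 * b 10%N) / (m2 ^+ 2 + m3 ^+ 2),
      W 10%N = b 10%N - 2%:R * m3 * (m2 * b 9%N + m3 * b 10%N) / (m2 ^+ 2 + m3 ^+ 2) &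
      a2 = 0 -> [/\ W 11%N = b 11%N,
        W 12%N = b 12%N - 2%:R * m2 * (m2 * b 12%N + m3 * b 13%N) / (m2 ^+ 2 + m3 ^+ 2) &
        W 13%N = b 13%N - 2%:R * m3 * (m2 * b 12%N + m3 * b 13%N) / (m2 ^+ 2 + m3 ^+ 2)]].
Proof.
move=> hA hB nA nB hl W; rewrite /W; split.
- move=> [|[|[|[|[|[|[|[|[|?]]]]]]]]] // _ /=; rewrite hl.
  + by fld.
  + by fld.
  + transitivity (b 3%N - 2%:R * a2 * (a2 * b 3%N + a3 * b 4%N) / (a2 ^+ 2 + a3 ^+ 2)).
      by fld.
    by rewrite hA mulr0 mul0r subr0.
  + transitivity (b 4%N - 2%:R * a3 * (a2 * b 3%N + a3 * b 4%N) / (a2 ^+ 2 + a3 ^+ 2)).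
      by fld.
    by rewrite hA mulr0 mul0r subr0.
  + by fld.
  + transitivity (b 6%N - 2%:R * m2 * (m2 * b 6%N + m3 * b 7%N) / (m2 ^+ 2 + m3 ^+ 2)).
      by fld.
    by rewrite hB mulr0 mul0r subr0.
  + transitivity (b 7%N - 2%:R * m3 * (m2 * b 6%N + m3 * b 7%N) / (m2 ^+ 2 + m3 ^+ 2)).
      by fld.
    by rewrite hB mulr0 mul0r subr0.
  + by fld.
- by rewrite /= hl; fld.
- by rewrite /= hl; fld.
- move=> a0; subst a2; rewrite /= hl.
  have a3n : a3 != 0 by apply/eqP => h; move: nA; rewrite h !expr2 !mul0r addr0 eqxx.
  split; by fld.
Qed.

Lemma perp2 (x y : R) : exists a2 a3 : R,
  [/\ a2 * x + a3 * y = 0, a2 ^+ 2 + a3 ^+ 2 != 0,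
     (x ^+ 2 + y ^+ 2 != 0 -> a2 = y /\ a3 = - x) &
     (x ^+ 2 + y ^+ 2 = 0 -> a2 = 1 /\ a3 = 0)].
Proof.
have [h|h] := eqVneq (x ^+ 2 + y ^+ 2) 0.
- have [e1 e2] := sq0 h; exists 1, 0; split.
  + by rewrite e1 e2 !mulr0 addr0.
  + by rewrite expr1n expr2 mulr0 addr0 oner_eq0.
  + by [].
  + by [].
- exists y, (- x); split => //.
  + ring.
  + by rewrite sqrrN addrC.
  + by [] || (by move=> h'; rewrite h' eqxx in h).
Qed.

Lemma nonneg_prod (a2 a3 m2 m3 : R) : 0 <= (a2 ^+ 2 + a3 ^+ 2) * (m2 ^+ 2 + m3 ^+ 2).
Proof. by rewrite mulr_ge0 // addr_ge0 // sqr_ge0. Qed.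

Lemma EW (l a2 a3 m2 m3 : R) (s : st) :
  Bv (sc l (pA 0 a2 a3 (pB 0 m2 m3 (sf s)))) = Tsc l (TA 0 a2 a3 (TB 0 m2 m3 (Tsf (Bv s)))).
Proof. by rewrite Bvsc BvpA BvpB Bvsf. Qed.

Lemma sym9 : symP 9.
Proof.
move=> s Ns; have P := pure_pureB Ns.
have [a2 [a3 [hA nA _ _]]] := perp2 (Bv s 3) (Bv s 4).
have [m2 [m3 [hB nB hB1 hB0]]] := perp2 (Bv s 6) (Bv s 7).
set l := (Num.sqrt ((a2 ^+ 2 + a3 ^+ 2) * (m2 ^+ 2 + m3 ^+ 2)))^-1.
have hl : l ^+ 2 = ((a2 ^+ 2 + a3 ^+ 2) * (m2 ^+ 2 + m3 ^+ 2))^-1 by rewrite sqrtV2 // nonneg_prod.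
have [H18 H9 H10 _] := antiW hA hB nA nB hl.
exists (sc l (pA 0 a2 a3 (pB 0 m2 m3 (sf s)))); rewrite EW; split.
- by rewrite -[nrm _]/(Bv _ 1%N) EW H18 // (pN P).
- by move=> k /andP [k1 k9]; rewrite H18 // k1.
- rewrite H9; move: hB1 hB0 H9; move: (Bv s) P => b P hB1 hB0 _ /=.
  have [h|h] := eqVneq (b 6%N ^+ 2 + b 7%N ^+ 2) 0.
  + have [-> ->] := hB0 h; have [e6 e7] := sq0 h; rewrite e6 e7 !mul0r; by fld.
  + have [-> ->] := hB1 h; rewrite -(pCb1 P); by fld.
Qed.

Lemma sym10 : symP 10.
Proof.
move=> s Ns; have P := pure_pureB Ns.
have [h7|h7] := eqVneq (Bv s 7) 0; last first.
  exists s; split => //; move: h7; move: (Bv s) P => b P h7 /=.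
  by rewrite -(pCb1 P); fld.
have [a2 [a3 [hA nA _ _]]] := perp2 (Bv s 3) (Bv s 4).
have hB : 0 * Bv s 6 + 1 * Bv s 7 = 0 by rewrite h7; ring.
have nB : (0 : R) ^+ 2 + 1 ^+ 2 != 0 by rewrite expr2 mul0r add0r expr1n oner_eq0.
set l := (Num.sqrt ((a2 ^+ 2 + a3 ^+ 2) * (0 ^+ 2 + 1 ^+ 2)))^-1.
have hl : l ^+ 2 = ((a2 ^+ 2 + a3 ^+ 2) * (0 ^+ 2 + 1 ^+ 2))^-1 by rewrite sqrtV2 // nonneg_prod.
have [H18 H9 H10 _] := antiW hA hB nA nB hl.
exists (sc l (pA 0 a2 a3 (pB 0 0 1 (sf s)))); rewrite EW; split.
- by rewrite -[nrm _]/(Bv _ 1%N) EW H18 // (pN P).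
- move=> k /andP [k1 k10]; have [k9|k9] := leqP k 8; first by rewrite H18 // k1.
  have -> : k = 9%N by apply/eqP; rewrite eqn_leq -ltnS k10 k9.
  rewrite H9; ring.
- rewrite H10; move: h7; move: (Bv s) P => b P h7 /=; rewrite h7 invr0 mulr0; by fld.
Qed.

Lemma sym11 : symP 11.
Proof.
move=> s Ns; have P := pure_pureB Ns.
have [hQ|hQ] := eqVneq (Qn (Bv s)) 0; last first.
  exists s; split => //; move: hQ; move: (Bv s) P => b P hQ /=.
  rewrite -(pQ1 P); by fld.
have [e3 e4] := sq0 hQ.
exists (pA 1 0 0 s); split.
- nrmB; gen s P; rewrite (pN P); ring.
- pre; move: e3 e4; gen s P; move=> e3 e4; rewrite ?(pN P) ?e3 ?e4; ring.
- move: hQ; gen s P; move=> hQ; rewrite hQ invr0 mulr0; ring.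
Qed.

Lemma sym12 : symP 12.
Proof.
move=> s Ns; have P := pure_pureB Ns.
have [hQ|hQ] := eqVneq (Qn (Bv s)) 0; last first.
  exists s; split => //; move: hQ; move: (Bv s) P => b P hQ /=.
  rewrite hQ -(pQ2 P); by fld.
have [e3 e4] := sq0 hQ.
have [m2 [m3 [hB' nB hB1 hB0]]] := perp2 (Bv s 9) (Bv s 10).
have hA : 0 * Bv s 3 + 1 * Bv s 4 = 0 by rewrite e4; ring.
have nA : (0 : R) ^+ 2 + 1 ^+ 2 != 0 by rewrite expr2 mul0r add0r expr1n oner_eq0.
have hB : m2 * Bv s 6 + m3 * Bv s 7 = 0.
  rewrite -(pCa2 P) -(pCa3 P) e3 e4.
  transitivity (Bv s 2 * (m2 * Bv s 9 + m3 * Bv s 10)); first ring.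
  by rewrite hB' mulr0.
set l := (Num.sqrt ((0 ^+ 2 + 1 ^+ 2) * (m2 ^+ 2 + m3 ^+ 2)))^-1.
have hl : l ^+ 2 = ((0 ^+ 2 + 1 ^+ 2) * (m2 ^+ 2 + m3 ^+ 2))^-1 by rewrite sqrtV2 // nonneg_prod.
have [H18 H9 H10 H2] := antiW hA hB nA nB hl; have [H11 H12 _] := H2 erefl.
have pre : forall k, (1 <= k < 12)%N -> Tsc l (TA 0 0 1 (TB 0 m2 m3 (Tsf (Bv s)))) k = Bv s k.
{ move=> k /andP [k1 k12]; have [k9|k9] := leqP k 8; first by rewrite H18 // k1.
  case: k k1 k12 k9 => [|[|[|[|[|[|[|[|[|[|[|[|k]]]]]]]]]]]] // _ _ _.
  all: first [by rewrite H9 hB' mulr0 mul0r subr0 | by rewrite H10 hB' mulr0 mul0r subr0 | by rewrite H11]. }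
exists (sc l (pA 0 0 1 (pB 0 m2 m3 (sf s)))); rewrite EW; split.
- by rewrite -[nrm _]/(Bv _ 1%N) EW H18 // (pN P).
- exact: pre.
- rewrite H12; move: hB1 hB0 hQ e3 H12; move: (Bv s) P => b P hB1 hB0 hQ e3 _ /=.
  rewrite hQ eqxx /=.
  have [h|h] := eqVneq (b 9%N ^+ 2 + b 10%N ^+ 2) 0.
  + have [-> ->] := hB0 h; have [e9 e10] := sq0 h; rewrite e9 e10 !(mulr0, mul0r, oppr0); by fld.
  + have [-> ->] := hB1 h.
    transitivity (2%:R * (- (b 8%N * b 9%N * b 11%N) / (b 9%N ^+ 2 + b 10%N ^+ 2)) - b 12%N
       + 2%:R * b 9%N * (b 8%N * b 11%N + b 9%N * b 12%N + b 10%N * b 13%N) / (b 9%N ^+ 2 + b 10%N ^+ 2)).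
      by fld.
    by rewrite (pR12 P) e3 mulr0 mulr0 mul0r addr0.
Qed.

Lemma sym13 : symP 13.
Proof.
move=> s Ns; have P := pure_pureB Ns.
have [hQ|hQ] := eqVneq (Qn (Bv s)) 0; last first.
  exists s; split => //; move: hQ; move: (Bv s) P => b P hQ /=.
  rewrite hQ -(pQ3 P); by fld.
have [e3 e4] := sq0 hQ.
have [h10|h10] := eqVneq (Bv s 10) 0; last first.
  exists s; split => //; move: hQ h10 e3; move: (Bv s) P => b P hQ h10 e3 /=.
  rewrite hQ eqxx /=.
  transitivity (2%:R * (- (b 8%N * b 11%N + b 9%N * b 12%N) / b 10%N) - b 13%N
       + 2%:R * (b 8%N * b 11%N + b 9%N * b 12%N + b 10%N * b 13%N) / b 10%N).
    by fld.
  by rewrite (pR12 P) e3 mulr0 mulr0 mul0r addr0.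
have hA : 0 * Bv s 3 + 1 * Bv s 4 = 0 by rewrite e4; ring.
have nA : (0 : R) ^+ 2 + 1 ^+ 2 != 0 by rewrite expr2 mul0r add0r expr1n oner_eq0.
have hB : 0 * Bv s 6 + 1 * Bv s 7 = 0.
  by rewrite -(pCa3 P) e3 e4 h10; ring.
have hl : (1 : R) ^+ 2 = ((0 ^+ 2 + 1 ^+ 2) * (0 ^+ 2 + 1 ^+ 2))^-1.
  by rewrite !expr2 !mul0r !add0r !mulr1 invr1.
have [H18 H9 H10 H2] := antiW hA hB nA nA hl; have [H11 H12 H13] := H2 erefl.
have pre : forall k, (1 <= k < 13)%N -> Tsc 1 (TA 0 0 1 (TB 0 0 1 (Tsf (Bv s)))) k = Bv s k.
{ move=> k /andP [k1 k13]; have [k9|k9] := leqP k 8; first by rewrite H18 // k1.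
  case: k k1 k13 k9 => [|[|[|[|[|[|[|[|[|[|[|[|[|k]]]]]]]]]]]]] // _ _ _.
  all: first [by rewrite H9 h10; ring | by rewrite H10 h10; ring | by rewrite H11 | by rewrite H12; ring]. }
exists (sc 1 (pA 0 0 1 (pB 0 0 1 (sf s)))); rewrite EW; split.
- by rewrite -[nrm _]/(Bv _ 1%N) EW H18 // (pN P).
- exact: pre.
- rewrite H13; move: hQ h10 H13; move: (Bv s) P => b P hQ h10 _ /=.
  rewrite hQ eqxx /= h10 invr0 mulr0; by fld.
Qed.

Lemma sym14 : symP 14.
Proof. move=> s Ns; have P := pure_pureB Ns; exists s; split => //; rewrite [X in 2%:R * X]/= -(pX1 P); ring. Qed.
Lemma sym15 : symP 15.
Proof. move=> s Ns; have P := pure_pureB Ns; exists s; split => //; rewrite [X in 2%:R * X]/= -(pX2 P); ring. Qed.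
Lemma sym16 : symP 16.
Proof. move=> s Ns; have P := pure_pureB Ns; exists s; split => //; rewrite [X in 2%:R * X]/= -(pX3 P); ring. Qed.
End S5.

Section S6.
Variable R : realType.

Ltac fld6 := field; do ?[apply/andP; split]; try done; try assumption.
Ltac fldp := field; do ?[apply/andP; split]; try done; try assumption; try (rewrite gt_eqF //; lra).

Lemma D_form (b h : R) : h ^+ 2 < 1 -> Dchi2 b h = (b - h) ^+ 2 / (1 - h ^+ 2).
Proof.
move=> h1; rewrite /Dchi2.
have hp : h + 1 != 0.
  apply/eqP => e; have e' : h = -1 by lra.
  by rewrite e' sqrrN expr1n ltxx in h1.
have hm : 1 - h != 0.
  apply/eqP => e; have e' : h = 1 by lra.
  by rewrite e' expr1n ltxx in h1.
have hh : 1 - h ^+ 2 != 0 by rewrite subr_eq0 eq_sym lt_eqF.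
case: ifP => [/andP [/orP [/eqP e|/eqP e] _]|_].
- by rewrite e expr1n ltxx in h1.
- by rewrite e sqrrN expr1n ltxx in h1.
- by fld6.
Qed.

Lemma D_zero (b : R) : Dchi2 b 0 = b ^+ 2.
Proof. rewrite D_form; first by fld6. by rewrite expr2 mul0r ltr01. Qed.

Lemma D_same (x : R) : Dchi2 x x = 0.
Proof.
rewrite /Dchi2; case: ifP => // /negbT hn.
have [e|e] := eqVneq x 1; first by rewrite e eqxx /= in hn.
have [e'|e'] := eqVneq x (-1); first by rewrite e' eqxx orbT /= in hn.
have hp : x + 1 != 0 by apply/eqP => h; apply/eqP: e'; lra.
have hm : 1 - x != 0 by apply/eqP => h; apply/eqP: e; lra.
by fld6.
Qed.


Lemma D_le (b h L : R) : 0 < L -> L <= 1 - h ^+ 2 -> Dchi2 b h <= (b - h) ^+ 2 / L.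
Proof.
move=> L0 hL; rewrite D_form; last by lra.
apply: ler_wpM2l; first exact: sqr_ge0.
rewrite lef_pV2 ?posrE //; lra.
Qed.

Lemma circle (x y z wx wy wz k R2 : R) :
  x ^+ 2 + y ^+ 2 + z ^+ 2 = R2 -> R2 <= 1 -> x * wx + y * wy + z * wz = k ->
  Dchi2 x (k * wx / (wx ^+ 2 + wy ^+ 2 + wz ^+ 2))
  + Dchi2 y (wy * (k - wx * x) / (wy ^+ 2 + wz ^+ 2))
  + Dchi2 z ((k - wx * x - wy * y) / wz)
  <= R2 - k ^+ 2 / (wx ^+ 2 + wy ^+ 2 + wz ^+ 2).
Proof.
move=> hR hR1 hk.
have CS : k ^+ 2 <= R2 * (wx ^+ 2 + wy ^+ 2 + wz ^+ 2).
  rewrite -hR -hk.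
  have -> : (x ^+ 2 + y ^+ 2 + z ^+ 2) * (wx ^+ 2 + wy ^+ 2 + wz ^+ 2)
     = (x * wx + y * wy + z * wz) ^+ 2 + ((x * wy - y * wx) ^+ 2 + (x * wz - z * wx) ^+ 2 + (y * wz - z * wy) ^+ 2)
    by ring.
  rewrite lerDl; do 2 ?apply: addr_ge0; exact: sqr_ge0.
have W0 : 0 <= wx ^+ 2 + wy ^+ 2 + wz ^+ 2 by rewrite !addr_ge0 ?sqr_ge0.
have kW : k ^+ 2 <= wx ^+ 2 + wy ^+ 2 + wz ^+ 2 by nra.
have [hz|hz] := eqVneq wz 0.
- rewrite hz invr0 mulr0 D_zero.
  have [hy|hy] := eqVneq wy 0.
  + rewrite hy !mul0r D_zero.
    have [hx|hx] := eqVneq wx 0.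
    * have k0 : k = 0 by rewrite -hk hx hy hz; ring.
      rewrite k0 !mul0r !D_zero -hR; rewrite [_ ^+ 2 / _](_ : _ = 0); [lra | by rewrite expr2 !mul0r].
    * have ex : x = k / wx by rewrite -hk hy hz; field.
      have -> : k * wx / (wx ^+ 2 + 0 ^+ 2 + 0 ^+ 2) = x by rewrite ex; field.
      have -> : R2 - k ^+ 2 / (wx ^+ 2 + 0 ^+ 2 + 0 ^+ 2) = y ^+ 2 + z ^+ 2.
        by rewrite -hR ex; fld6.
      by rewrite D_same add0r.
  + have z2 : (0:R) ^+ 2 = 0 by rewrite expr2 mul0r.
    have q0 : 0 < wy ^+ 2 + 0 ^+ 2 by rewrite z2 addr0 lt_def sqrf_eq0 hy sqr_ge0.
    have W0' : 0 < wx ^+ 2 + wy ^+ 2 + 0 ^+ 2 by apply: lt_le_trans q0 _; rewrite -addrA lerDr sqr_ge0.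
    rewrite hz in hk.
    have wy2 : 0 < wy ^+ 2 by rewrite lt_def sqrf_eq0 hy sqr_ge0.
    have wx2 := sqr_ge0 wx.
    have -> : wy * (k - wx * x) / (wy ^+ 2 + 0 ^+ 2) = y by rewrite -hk; fld6.
    rewrite D_same addr0.
    have Lx : Dchi2 x (k * wx / (wx ^+ 2 + wy ^+ 2 + 0 ^+ 2))
        <= (x - k * wx / (wx ^+ 2 + wy ^+ 2 + 0 ^+ 2)) ^+ 2 / ((wy ^+ 2 + 0 ^+ 2) / (wx ^+ 2 + wy ^+ 2 + 0 ^+ 2)).
      apply: D_le; first exact: divr_gt0.
      rewrite -subr_ge0.
      have -> : 1 - (k * wx / (wx ^+ 2 + wy ^+ 2 + 0 ^+ 2)) ^+ 2 - (wy ^+ 2 + 0 ^+ 2) / (wx ^+ 2 + wy ^+ 2 + 0 ^+ 2)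
        = wx ^+ 2 * ((wx ^+ 2 + wy ^+ 2 + 0 ^+ 2) - k ^+ 2) / (wx ^+ 2 + wy ^+ 2 + 0 ^+ 2) ^+ 2.
        by fldp.
      apply: divr_ge0; last exact: sqr_ge0.
      apply: mulr_ge0; first exact: sqr_ge0.
      by rewrite subr_ge0; move: kW; rewrite hz.
    have E : (x - k * wx / (wx ^+ 2 + wy ^+ 2 + 0 ^+ 2)) ^+ 2 / ((wy ^+ 2 + 0 ^+ 2) / (wx ^+ 2 + wy ^+ 2 + 0 ^+ 2))
         + z ^+ 2 = R2 - k ^+ 2 / (wx ^+ 2 + wy ^+ 2 + 0 ^+ 2).
      by rewrite -hR -hk; fldp.
    lra.
- have q0 : 0 < wy ^+ 2 + wz ^+ 2 by rewrite ltr_pwDr ?sqr_ge0 // lt_def sqrf_eq0 hz sqr_ge0.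
  have W0' : 0 < wx ^+ 2 + wy ^+ 2 + wz ^+ 2 by apply: lt_le_trans q0 _; rewrite -addrA lerDr sqr_ge0.
  have wz2 : 0 < wz ^+ 2 by rewrite lt_def sqrf_eq0 hz sqr_ge0.
  have wx2 := sqr_ge0 wx; have wy2 := sqr_ge0 wy.
  have -> : (k - wx * x - wy * y) / wz = z by rewrite -hk; fld6.
  rewrite D_same addr0.
  have Lx : Dchi2 x (k * wx / (wx ^+ 2 + wy ^+ 2 + wz ^+ 2))
      <= (x - k * wx / (wx ^+ 2 + wy ^+ 2 + wz ^+ 2)) ^+ 2 / ((wy ^+ 2 + wz ^+ 2) / (wx ^+ 2 + wy ^+ 2 + wz ^+ 2)).
    apply: D_le; first exact: divr_gt0.
    rewrite -subr_ge0.
    have -> : 1 - (k * wx / (wx ^+ 2 + wy ^+ 2 + wz ^+ 2)) ^+ 2 - (wy ^+ 2 + wz ^+ 2) / (wx ^+ 2 + wy ^+ 2 + wz ^+ 2)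
      = wx ^+ 2 * ((wx ^+ 2 + wy ^+ 2 + wz ^+ 2) - k ^+ 2) / (wx ^+ 2 + wy ^+ 2 + wz ^+ 2) ^+ 2.
      by fldp.
    apply: divr_ge0; last exact: sqr_ge0.
    apply: mulr_ge0; first exact: sqr_ge0.
    by rewrite subr_ge0.
  have m2q : (k - wx * x) ^+ 2 <= wy ^+ 2 + wz ^+ 2.
    have -> : k - wx * x = y * wy + z * wz by rewrite -hk; ring.
    have : (y * wy + z * wz) ^+ 2 <= (y ^+ 2 + z ^+ 2) * (wy ^+ 2 + wz ^+ 2).
      have -> : (y ^+ 2 + z ^+ 2) * (wy ^+ 2 + wz ^+ 2) = (y * wy + z * wz) ^+ 2 + (y * wz - z * wy) ^+ 2 by ring.
      by rewrite lerDl sqr_ge0.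
    have : y ^+ 2 + z ^+ 2 <= 1 by have := sqr_ge0 x; lra.
    nra.
  have Ly : Dchi2 y (wy * (k - wx * x) / (wy ^+ 2 + wz ^+ 2))
      <= (y - wy * (k - wx * x) / (wy ^+ 2 + wz ^+ 2)) ^+ 2 / (wz ^+ 2 / (wy ^+ 2 + wz ^+ 2)).
    apply: D_le; first by apply: divr_gt0 => //; rewrite lt_def sqrf_eq0 hz sqr_ge0.
    rewrite -subr_ge0.
    have -> : 1 - (wy * (k - wx * x) / (wy ^+ 2 + wz ^+ 2)) ^+ 2 - wz ^+ 2 / (wy ^+ 2 + wz ^+ 2)
      = wy ^+ 2 * ((wy ^+ 2 + wz ^+ 2) - (k - wx * x) ^+ 2) / (wy ^+ 2 + wz ^+ 2) ^+ 2.
      by fldp.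
    apply: divr_ge0; last exact: sqr_ge0.
    apply: mulr_ge0; first exact: sqr_ge0.
    by rewrite subr_ge0.
  have E : (x - k * wx / (wx ^+ 2 + wy ^+ 2 + wz ^+ 2)) ^+ 2 / ((wy ^+ 2 + wz ^+ 2) / (wx ^+ 2 + wy ^+ 2 + wz ^+ 2))
       + (y - wy * (k - wx * x) / (wy ^+ 2 + wz ^+ 2)) ^+ 2 / (wz ^+ 2 / (wy ^+ 2 + wz ^+ 2))
       = R2 - k ^+ 2 / (wx ^+ 2 + wy ^+ 2 + wz ^+ 2).
    by rewrite -hR -hk; fldp.
  lra.
Qed.
End S6.

Section S7.
Variable R : realType.
Local Notation st := (st R).

Lemma symAll i : (2 <= i <= 16)%N -> symP R i.
Proof.
case: i => [|[|[|[|[|[|[|[|[|[|[|[|[|[|[|[|[|i]]]]]]]]]]]]]]]]] // _.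
exact: sym2. exact: sym3. exact: sym4. exact: sym5. exact: sym6. exact: sym7. exact: sym8.
exact: sym9. exact: sym10. exact: sym11. exact: sym12. exact: sym13. exact: sym14.
exact: sym15. exact: sym16.
Qed.

Lemma hmid_cfun (psi : qvec R) i : is_pure psi -> (2 <= i <= 16)%N ->
  hmid psi i = cfun i (Bv (tost psi)).
Proof.
move=> Pp hi; apply: hmid_eq => // s Ns Hpre.
have [s' [Ns' Hp' Hv]] := symAll hi Ns.
exists s'; split => //; rewrite Hv; congr (_ * _ - _).
exact: cfun_pre.
Qed.

Lemma I_eq (psi : qvec R) : is_pure psi ->
  I_chi2_post psi = \sum_(2 <= i < 17) Dchi2 (Bv (tost psi) i) (cfun i (Bv (tost psi))).
Proof.
move=> Pp; apply: eq_big_nat => i /andP [i2 i17].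
have hi : (2 <= i <= 16)%N by rewrite i2 -ltnS.
rewrite hmid_cfun // bloch_Bv //; apply/andP; split => //; exact: leq_trans i2.
Qed.

End S7.

Section S8.
Variable R : realType.
Local Notation st := (st R).
Implicit Types (b : nat -> R).

Lemma bound b : pureB b -> \sum_(2 <= i < 17) Dchi2 (b i) (cfun i b) <= 2.
Proof.
move=> P.
do 15 rewrite big_ltn //; rewrite big_geq // addr0 /=.
rewrite !D_zero.
have hAB := pAB P; have hA1 := pA1 P.
move: hAB hA1; rewrite /An /Bn => hAB hA1.
have sq := fun k => sqr_ge0 (b k).
have R1 : 1 - An b + b 2%N ^+ 2 <= 1.
  rewrite /An; have := sq 3%N; have := sq 4%N; lra.
have row1 := circle (pR1 P) R1 (pCb1 P).
set t := b 2%N ^+ 2 / (b 5%N ^+ 2 + b 6%N ^+ 2 + b 7%N ^+ 2) in row1.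
have ht : b 2%N ^+ 2 <= t.
  have [h0|h0] := eqVneq (b 5%N ^+ 2 + b 6%N ^+ 2 + b 7%N ^+ 2) 0.
    have : b 2%N ^+ 2 <= 0 by have := sq 3%N; have := sq 4%N; lra.
    by rewrite /t h0 invr0 mulr0.
  have pos : 0 < b 5%N ^+ 2 + b 6%N ^+ 2 + b 7%N ^+ 2.
    by rewrite lt_def h0 !addr_ge0 ?sqr_ge0.
  rewrite /t ler_pdivlMr // ler_piMr ?sqr_ge0 //; lra.
rewrite /Bn.
have [hQ|hQ] := eqVneq (Qn b) 0.
- have [e3 e4] := sq0 hQ.
  have R2e : b 11%N ^+ 2 + b 12%N ^+ 2 + b 13%N ^+ 2 = 1 - An b.
    by rewrite (pR2 P) e3 expr2 mul0r addr0.
  have R2l : 1 - An b <= 1 by rewrite /An; have := sq 2%N; have := sq 3%N; have := sq 4%N; lra.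
  have k2 : b 11%N * b 8%N + b 12%N * b 9%N + b 13%N * b 10%N = 0.
    by rewrite -[RHS](mulr0 (b 2%N)) -e3 -(pR12 P); ring.
  have row2 := circle R2e R2l k2.
  rewrite !mul0r !sub0r in row2.
  rewrite (_ : b 9%N * - (b 8%N * b 11%N) = - (b 8%N * b 9%N * b 11%N)) in row2; last by ring.
  rewrite (_ : - (b 8%N * b 11%N) - b 9%N * b 12%N = - (b 8%N * b 11%N + b 9%N * b 12%N)) in row2; last by ring.
  rewrite hQ invr0 mulr0 ?eqxx /=.
  rewrite -(pX1 P) -(pX2 P) -(pX3 P) !D_same.
  have z2 : (0 : R) ^+ 2 = 0 by rewrite expr2 mul0r.
  rewrite z2 mul0r subr0 in row2.
  move: row2 row1; rewrite /An e3 e4 z2 => row2 row1.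
  move: hAB hA1; rewrite e3 e4 z2 => hAB hA1.
  lra.
- have e11 : (b 3%N * b 5%N - b 4%N * bx1 b - b 2%N * b 3%N * b 8%N) / Qn b = b 11%N.
    by rewrite -(pQ1 P) mulrC mulKf.
  have e12 : (b 3%N * b 6%N - b 4%N * bx2 b - b 2%N * b 3%N * b 9%N) / Qn b = b 12%N.
    by rewrite -(pQ2 P) mulrC mulKf.
  have e13 : (b 3%N * b 7%N - b 4%N * bx3 b - b 2%N * b 3%N * b 10%N) / Qn b = b 13%N.
    by rewrite -(pQ3 P) mulrC mulKf.
  rewrite ?hQ /= e11 e12 e13 -(pX1 P) -(pX2 P) -(pX3 P) !D_same.
  move: row1; rewrite /An => row1.
  lra.
Qed.

End S8.

Section S9.
Variable R : realType.
Local Notation st := (st R).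

Definition sstar : st := St (2^-1) (2^-1) (2^-1) (- 2^-1) 0 0 0 0.
Definition bstar (i : nat) : R :=
  if (i == 1)%N || (i == 10)%N || (i == 12)%N || (i == 14)%N then 1 else 0.

Lemma Bv_star : Bv sstar = bstar.
Proof.
apply: boolp.funext => i.
case: i => [|[|[|[|[|[|[|[|[|[|[|[|[|[|[|[|[|i]]]]]]]]]]]]]]]]] //=;
rewrite /nrm /al1 /al2 /al3 /be1 /be2 /be3 /c11 /c12 /c13 /c21 /c22 /c23 /c31 /c32 /c33 /bstar /=;
field; rewrite ?pnatr_eq0 //.
Qed.

Lemma star_pure : nrm sstar = 1.
Proof. by rewrite -[nrm _]/(Bv _ 1%N) Bv_star. Qed.

Lemma star_I : \sum_(2 <= i < 17) Dchi2 (Bv sstar i) (cfun i (Bv sstar)) = 2.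
Proof.
rewrite Bv_star.
do 15 rewrite big_ltn //; rewrite big_geq // addr0 /=.
rewrite /bstar /Bn /Qn /bx1 /bx2 /bx3 /=.
have z2 : (0 : R) ^+ 2 = 0 by rewrite expr2 mul0r.
rewrite ?(z2, expr1n, mul0r, mulr0, add0r, addr0, subr0, sub0r, oppr0, invr0, mulr1, mul1r, eqxx) /=.
rewrite ?(z2, expr1n, mul0r, mulr0, add0r, addr0, subr0, sub0r, oppr0, invr0, mulr1, mul1r, eqxx) /=.
by rewrite opprK !D_zero D_same; ring.
Qed.

Lemma main_thm :
  (forall psi : qvec R, is_pure psi -> I_chi2_post psi <= 2) /\
  (exists psi : qvec R, is_pure psi /\ I_chi2_post psi = 2).
Proof.
split.
- move=> psi Pp; rewrite I_eq //; apply: bound; apply: pure_pureB; exact/pure_nrm.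
- have Pp : is_pure (ofst sstar) by apply/pure_nrm; rewrite tost_ofst star_pure.
  exists (ofst sstar); split => //.
  by rewrite I_eq // tost_ofst star_I.
Qed.

End S9.

Theorem theorem1 (R : realType) :
  (forall psi : qvec R, is_pure psi -> I_chi2_post psi <= 2) /\
  (exists psi : qvec R, is_pure psi /\ I_chi2_post psi = 2).
Proof. exact: main_thm. Qed.
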